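(* Let $T$ be a tree on $n\geq 3$ vertices whose vertex degrees are $\Delta=d_1\geq d_2\geq\cdots\geq d_n$. Then $$\mathcal{E}(T)\leq \sum_{i=2}^n 2\sqrt{d_i-1}+2\sqrt{\Delta}\leq \sum_{i=1}^n 2\sqrt{d_i-1}+1.$$
   Context: For a finite simple graph $G$ with adjacency matrix $A(G)$ having eigenvalues $\lambda_1,\dots,\lambda_n$, the energy of $G$ is $\mathcal{E}(G)=\sum_{i=1}^n|\lambda_i|$. *)

(* Defs.v *)
From mathcomp Require Import all_boot all_order all_algebra.
From mathcomp Require Import algC.
Set Implicit Arguments. Unset Strict Implicit. Unset Printing Implicit Defensive.
Import Order.TTheory GRing.Theory Num.Theory.
Local Open Scope ring_scope.

Definition simple_graph n (e : rel 'I_n) : Prop := symmetric e /\ irreflexive e.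

Definition connected_graph n (e : rel 'I_n) : Prop := forall x y, connect e x y.

Definition acyclic_graph n (e : rel 'I_n) : Prop :=
  forall c : seq 'I_n, (3 <= size c)%N -> ~ ucycle e c.

Definition is_tree n (e : rel 'I_n) : Prop :=
  [/\ simple_graph e, connected_graph e & acyclic_graph e].

Definition deg n (e : rel 'I_n) (v : 'I_n) : nat := #|[set w | e v w]|.

(* degree sequence sorted non-increasingly: d_1 >= d_2 >= ... >= d_n,
   with d_(i+1) = nth 0 (degseq e) i *)
Definition degseq n (e : rel 'I_n) : seq nat :=
  sort geq [seq deg e v | v <- enum 'I_n].

Definition adjmx n (e : rel 'I_n) : 'M[algC]_n := \matrix_(i, j) (e i j)%:R.

(* eigenvalues (with multiplicity) = roots of the characteristic polynomial *)
Definition eigenvalues n (A : 'M[algC]_n) : seq algC :=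
  sval (closed_field_poly_normal (char_poly A)).

Definition energy n (e : rel 'I_n) : algC :=
  \sum_(z <- eigenvalues (adjmx e)) `|z|.

(* Main.v *)
Require Import Defs.
From mathcomp Require Import all_boot all_order all_algebra.
From mathcomp Require Import algC.
From mathcomp Require Import sesquilinear spectral zify ring.
Import Order.TTheory GRing.Theory Num.Theory.

Lemma bfs_dist n (e : rel 'I_n) (rho : 'I_n) : symmetric e ->
  (forall x y, connect e x y) ->
  exists dist : 'I_n -> nat, dist rho = 0 /\
    forall v, v != rho -> exists2 u, e v u & dist u < dist v.
Proof.
move=> esym conn.
pose P v k := [exists p : k.-tuple 'I_n, path e rho p && (last rho p == v)].
have Pex v : exists k, P v k.
  have /connectP [p pp pl] := conn rho v.
  exists (size p); apply/existsP; exists (in_tuple p) => /=.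
  by rewrite pp -pl eqxx.
exists (fun v => ex_minn (Pex v)); split.
  case: ex_minnP => m _ H; apply/eqP; rewrite -leqn0; apply: H.
  by apply/existsP; exists [tuple] => /=.
move=> v vr; case: ex_minnP => m /existsP [p /andP [pp /eqP pl]] mmin.
have [s [szs pps pls]] : exists s : seq 'I_n,
    [/\ size s = m, path e rho s & last rho s = v].
  by exists p; rewrite size_tuple.
case/lastP: s szs pps pls => [|q x] szs pps pls.
  by move: vr; rewrite -pls /= eqxx.
have sz : size q < m by rewrite -szs size_rcons.
move: pps pls; rewrite rcons_path last_rcons => /andP [pq eq] xv.
exists (last rho q); first by rewrite esym -xv.
case: ex_minnP => k _ kmin; apply: leq_ltn_trans sz.
apply: kmin; apply/existsP; exists (in_tuple q) => /=.
by rewrite pq eqxx.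
Qed.


Local Open Scope ring_scope.

Lemma size_degseq n (e : rel 'I_n) : size (degseq e) = n.
Proof. by rewrite /degseq size_sort size_map size_enum_ord. Qed.

Lemma degseq_sum n (e : rel 'I_n) (f : nat -> algC) :
  \sum_(1 <= i < n.+1) f (nth 0%N (degseq e) i.-1) = \sum_v f (deg e v).
Proof.
rewrite big_add1 /= -{1}(size_degseq n e) -(big_nth 0%N (fun=> true) f).
rewrite (perm_big _ (permEl (perm_sort _ _))) big_map.
by rewrite enumT.
Qed.

Lemma degseq_max n (e : rel 'I_n) : (0 < n)%N ->
  exists rho, deg e rho = nth 0%N (degseq e) 0 /\ forall v, (deg e v <= deg e rho)%N.
Proof.
move=> n0.
have gtr : transitive geq by move=> a b c /=; lia.
have gto : total geq by move=> a b /=; rewrite orbC leq_total.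
have : nth 0%N (degseq e) 0 \in [seq deg e v | v <- enum 'I_n].
  by rewrite -(perm_mem (permEl (perm_sort geq _))) mem_nth // (size_degseq n e).
case/mapP => rho _ rE; exists rho; split => // v.
have : deg e v \in degseq e.
  by rewrite /degseq (perm_mem (permEl (perm_sort geq _))); apply: map_f; rewrite mem_enum.
have := sort_sorted gto [seq deg e v | v <- enum 'I_n].
rewrite -/(degseq e) -rE.
case: (degseq e) => [|x t] //= pt; rewrite inE => /orP [/eqP -> //|vt].
by have /allP /(_ _ vt) := order_path_min gtr pt.
Qed.

Lemma cs_sq (n : nat) (W : {set 'I_n}) (a : 'I_n -> algC) :
  (forall i, 0 <= a i) ->
  (\sum_(i in W) a i) ^+ 2 <= #|W|%:R * \sum_(i in W) a i ^+ 2.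
Proof.
move=> a0.
have areal i : a i \is Num.real by apply: ger0_real.
suff: (\sum_(i in W) a i) ^+ 2 *+ 2 <= (#|W|%:R * \sum_(i in W) a i ^+ 2) *+ 2.
  by rewrite lerMn2r.
have -> : (\sum_(i in W) a i) ^+ 2 *+ 2 =
   \sum_(i in W) \sum_(j in W) (a i * a j *+ 2).
  rewrite expr2 mulr_suml -sumrMnl; apply: eq_bigr => i _.
  by rewrite mulr_sumr -sumrMnl.
have -> : (#|W|%:R * \sum_(i in W) a i ^+ 2) *+ 2 =
   \sum_(i in W) \sum_(j in W) (a i ^+ 2 + a j ^+ 2).
  set Q := \sum_(i in W) a i ^+ 2.
  symmetry; transitivity (\sum_(i in W) (a i ^+ 2 *+ #|W| + Q)).
    by apply: eq_bigr => i _; rewrite big_split /= sumr_const.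
  by rewrite big_split /= sumr_const sumrMnl mulr2n mulr_natl.
apply: ler_sum => i _; apply: ler_sum => j _.
rewrite -subr_ge0.
have -> : a i ^+ 2 + a j ^+ 2 - a i * a j *+ 2 = (a i - a j) ^+ 2.
  by rewrite sqrrB addrAC.
by apply: real_exprn_even_ge0 => //; apply: rpredB.
Qed.

Lemma cs_norm (n : nat) (W : {set 'I_n}) (x : 'I_n -> algC) :
  `|\sum_(i in W) x i| <= sqrtC (#|W|%:R) * sqrtC (\sum_i `|x i| ^+ 2).
Proof.
apply: le_trans (ler_norm_sum _ _ _) _.
have s0 : 0 <= \sum_(i in W) `|x i| by apply: sumr_ge0 => i _.
rewrite -(sqrCK s0) -sqrtCM ?nnegrE ?ler0n //; last first.
  by apply: sumr_ge0 => i _; apply: exprn_ge0.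
rewrite ler_sqrtC ?nnegrE; last 2 first.
- by apply: exprn_ge0.
- by apply: mulr_ge0; [apply: ler0n | apply: sumr_ge0 => i _; apply: exprn_ge0].
apply: le_trans (@cs_sq n W (fun i => `|x i|) (fun i => normr_ge0 (x i))) _.
apply: ler_wpM2l; first exact: ler0n.
rewrite [X in _ <= X](bigID (fun i => i \in W)) /= lerDl.
by apply: sumr_ge0 => i _; apply: exprn_ge0.
Qed.

Lemma sqrt_ineq (m : nat) : (1 <= m)%N ->
  2 * sqrtC ((m.+1)%:R : algC) <= 2 * sqrtC (m%:R : algC) + 1.
Proof.
move=> m1.
set a := sqrtC (m%:R : algC).
have a1 : 1 <= a.
  by rewrite -sqrtC1 /a ler_sqrtC ?nnegrE ?ler0n ?ler1n.
have a0 : 0 <= a by apply: le_trans a1; apply: ler01.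
have ma : (m.+1)%:R = a ^+ 2 + 1 :> algC by rewrite sqrtCK -addn1 natrD.
rewrite -(@ler_pXn2r _ 2) // ?nnegrE; last 2 first.
- by apply: mulr_ge0; rewrite ?sqrtC_ge0 ler0n.
- by apply: addr_ge0; [apply: mulr_ge0; [apply: ler0n|] | apply: ler01].
rewrite exprMn sqrtCK ma.
have -> : (2 * a + 1) ^+ 2 = 2 ^+ 2 * (a ^+ 2 + 1) + (4 * a - 3) by ring.
rewrite lerDl subr_ge0.
apply: (@le_trans _ _ (4 * 1)); first by rewrite mulr1 ler_nat.
by apply: ler_wpM2l; first by apply: ler0n.
Qed.

Section Spec.
Local Open Scope sesquilinear_scope.

Lemma char_poly_conj n (P M : 'M[algC]_n) : P \in unitmx ->
  char_poly (invmx P *m M *m P) = char_poly M.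
Proof.
move=> Pu; rewrite /char_poly /char_poly_mx.
have PP : map_mx polyC (invmx P) *m map_mx polyC P = 1%:M.
  by rewrite -map_mxM mulVmx // map_mx1.
have -> : 'X%:M - map_mx polyC (invmx P *m M *m P) =
   map_mx polyC (invmx P) *m ('X%:M - map_mx polyC M) *m map_mx polyC P.
  rewrite !map_mxM mulmxBr mulmxBl; congr (_ - _).
  by rewrite mul_mx_scalar -scalemxAl PP scalemx1.
rewrite !det_mulmx mulrC mulrA -det_mulmx.
by rewrite -map_mxM mulmxV // map_mx1 det1 mul1r.
Qed.


Lemma spectral_trace n (A : 'M[algC]_n) : A \is hermsymmx ->
  exists S : 'M[algC]_n, [/\ S^t* = S, S *m S = 1%:M &
    \sum_(z <- eigenvalues A) `|z| = \tr (S *m A)].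
Proof.
move=> Ah.
have HA := orthomx_spectralP (hermitian_normalmx Ah).
set P := spectralmx A in HA; set D := spectral_diag A in HA.
have Pun : P \is unitarymx by apply: spectral_unitarymx.
have Pu : P \in unitmx by apply: spectral_unit.
have PPc : P *m P^t* = 1%:M by apply/unitarymxP.
have iP : invmx P = P^t* by apply: invmx_unitary.
have PcP : P^t* *m P = 1%:M by rewrite -iP mulVmx.
have Dr : forall i, D 0 i \is Num.real.
  by move=> i; move/mxOverP: (hermitian_spectral_diag_real Ah); apply.
pose s := \row_i (if 0 <= D 0 i then 1 else -1 : algC).
pose S := P^t* *m diag_mx s *m P.
have ss : diag_mx s *m diag_mx s = 1%:M.
  rewrite mulmx_diag -diag_const_mx; congr diag_mx; apply/matrixP => i j.
  by rewrite !mxE; case: ifP => _; rewrite ?mulr1 ?mulrNN ?mulr1.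
have sc : diag_mx s ^t* = diag_mx s.
  rewrite tr_diag_mx map_diag_mx; congr diag_mx; apply/matrixP => i j.
  by rewrite !mxE; case: ifP => _; rewrite ?rmorphN rmorph1.
exists S; split.
- by rewrite /S !trmx_mul !map_mxM trmxCK sc mulmxA.
- rewrite /S -!mulmxA [P *m _]mulmxA PPc mul1mx.
  by rewrite !mulmxA -[_ *m diag_mx s *m diag_mx s]mulmxA ss mulmx1 PcP.
- have cpA : char_poly A = \prod_(i < n) ('X - (D 0 i)%:P).
    rewrite HA char_poly_conj // char_poly_trig ?diag_mx_is_trig //.
    by apply: eq_bigr => i _; rewrite mxE eqxx mulr1n.
  rewrite /eigenvalues; case: closed_field_poly_normal => r /= Hr.
  have pr : perm_eq r [seq D 0 i | i <- enum 'I_n].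
    apply: prod_XsubC_eq.
    have <- : char_poly A = \prod_(z <- r) ('X - z%:P).
      by rewrite {1}Hr (monicP (char_poly_monic A)) scale1r.
    by rewrite big_map enumT cpA.
  rewrite (perm_big _ pr) big_map enumT /=.
  rewrite {1}HA iP /S -!mulmxA [P *m _]mulmxA PPc mul1mx.
  rewrite mxtrace_mulC -!mulmxA PPc mulmx1 mulmx_diag mxtrace_diag.
  apply: eq_bigr => i _; rewrite !mxE.
  case: (real_ge0P (Dr i)) => h; first by rewrite mul1r.
  by rewrite mulN1r.
Qed.



Lemma energy_bound n (e : rel 'I_n) (r : 'I_n -> nat) :
  symmetric e -> irreflexive e -> injective r ->
  energy e <= \sum_v 2 * sqrtC (#|[set w | e v w && (r v < r w)%N]|%:R).
Proof.
move=> esym eirr rinj.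
set A := adjmx e.
have Ah : A \is hermsymmx.
  apply: realsym_hermsym.
    apply/is_hermitianmxP; rewrite expr0 scale1r; apply/matrixP => i j.
    by rewrite !mxE esym.
  by apply/mxOverP => i j; rewrite mxE realn.
have [S [Sh SS trE]] := @spectral_trace n A Ah.
set Cb := fun v w => e v w && (r v < r w)%N.
have Aeq i j : A j i = (Cb i j)%:R + (Cb j i)%:R.
  rewrite /A /adjmx mxE /Cb esym.
  case eij: (e i j) => /=; last by rewrite addr0.
  have nij : i != j by apply: contraTneq eij => ->; rewrite eirr.
  have rij : r i != r j by apply: contra nij => /eqP/rinj ->.
  by case: ltngtP rij => //= _ _; rewrite ?addr0 ?add0r.
have rowS i : \sum_j `|S i j| ^+ 2 = 1.
  have := congr1 (fun M : 'M[algC]_n => M i i) SS.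
  rewrite -{2}Sh !mxE eqxx mulr1n => <-.
  by apply: eq_bigr => j _; rewrite normCK !mxE.
have colS j : \sum_i `|S i j| ^+ 2 = 1.
  have := congr1 (fun M : 'M[algC]_n => M j j) SS.
  rewrite -{1}Sh !mxE eqxx mulr1n => <-.
  by apply: eq_bigr => i _; rewrite normCKC !mxE.
have e0 : 0 <= energy e by apply: sumr_ge0 => z _.
rewrite -(ger0_norm e0) /energy -/A trE.
have -> : \tr (S *m A) = \sum_i \sum_(j in [set w | Cb i w]) S i j
                        + \sum_j \sum_(i in [set w | Cb j w]) S i j.
  rewrite /mxtrace.
  have -> : \sum_j \sum_(i in [set w | Cb j w]) S i j
          = \sum_i \sum_j (Cb j i)%:R * S i j.
    rewrite [RHS]exchange_big /=; apply: eq_bigr => j _.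
    rewrite big_mkcond /=; apply: eq_bigr => i _.
    by rewrite inE; case: (Cb j i); rewrite ?mul1r ?mul0r.
  transitivity (\sum_i (\sum_(j in [set w | Cb i w]) S i j
                       + \sum_j (Cb j i)%:R * S i j)); last by rewrite big_split.
  apply: eq_bigr => i _.
  rewrite !mxE [X in _ = X + _]big_mkcond -big_split /=; apply: eq_bigr => j _.
  by rewrite inE Aeq mulrDr; case: (Cb i j); case: (Cb j i);
     rewrite ?mulr1 ?mulr0 ?mul1r ?mul0r.
apply: le_trans (ler_normD _ _) _.
rewrite -mulr_sumr mulr2n mulrDl !mul1r.
apply: lerD.
- apply: le_trans (ler_norm_sum _ _ _) _; apply: ler_sum => i _.
  by have := @cs_norm n [set w | Cb i w] (fun j => S i j); rewrite rowS sqrtC1 mulr1.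
- apply: le_trans (ler_norm_sum _ _ _) _; apply: ler_sum => j _.
  by have := @cs_norm n [set w | Cb j w] (fun i => S i j); rewrite colS sqrtC1 mulr1.
Qed.

End Spec.

Theorem theorem3p1 (n : nat) (e : rel 'I_n) :
  (3 <= n)%N -> is_tree e ->
  let d := fun i : nat => nth 0%N (degseq e) i.-1 in
  let Delta := d 1%N in
  energy e <=
    \sum_(2 <= i < n.+1) 2 * sqrtC (((d i).-1)%:R : algC) + 2 * sqrtC (Delta%:R : algC)
  /\
  \sum_(2 <= i < n.+1) 2 * sqrtC (((d i).-1)%:R : algC) + 2 * sqrtC (Delta%:R : algC) <=
    \sum_(1 <= i < n.+1) 2 * sqrtC (((d i).-1)%:R : algC) + 1.
Proof.
move=> n3 [[esym eirr] conn _] d Delta.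
have n0 : (0 < n)%N by lia.
have [rho [rhoE rmax]] := degseq_max n e n0.
have [dist [d0 dpar]] := @bfs_dist n e rho esym conn.
pose r v := (dist v * n + v)%N.
have rinj : injective r.
  move=> a b /(congr1 (modn^~ n)); rewrite /r !modnMDl !modn_small // => ab.
  exact: ord_inj.
pose C v := [set w | e v w && (r v < r w)%N].
have Crho : #|C rho| = deg e rho.
  rewrite /deg; apply: eq_card => w; rewrite !inE.
  case ew: (e rho w) => //=.
  have wr : w != rho by apply: contraTneq ew => ->; rewrite eirr.
  have [u _ du] := dpar w wr.
  have : (n <= dist w * n)%N by rewrite leq_pmull //; lia.
  rewrite /r d0 mul0n add0n; have := ltn_ord rho; lia.
have Cv v : v != rho -> (#|C v| <= (deg e v).-1)%N.
  move=> vr; have [u evu du] := dpar v vr.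
  have : C v \proper [set w | e v w].
    apply/properP; split.
      by apply/subsetP => w; rewrite !inE => /andP [].
    exists u; rewrite !inE evu //=.
    have : ((dist u).+1 * n <= dist v * n)%N by rewrite leq_mul2r du orbT.
    rewrite /r; have := ltn_ord u; have := ltn_ord v; lia.
  move/proper_card; rewrite /deg; lia.
have dr : d 1%N = deg e rho by rewrite rhoE.
have D2 : (2 <= deg e rho)%N.
  have deg2 w x y : e w x -> e w y -> x != y -> (2 <= deg e w)%N.
    move=> ex ey xy; rewrite /deg; have <- : #|[set x; y]| = 2%N by rewrite cards2 xy.
    by apply: subset_leq_card; apply/subsetP => z; rewrite !inE => /orP [] /eqP ->.
  have key w : w != rho -> (2 <= deg e rho)%N \/ e rho w.
    move=> wr; have [u ewu du] := dpar w wr.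
    have [urho|ur] := eqVneq u rho; first by right; rewrite esym -urho.
    left; have [q euq dq] := dpar u ur.
    apply: leq_trans (rmax u); apply: (deg2 u w q); [by rewrite esym | exact: euq |].
    by apply/eqP => wq; move: dq du; rewrite wq; lia.
  have : (1 < #|[set~ rho]|)%N by rewrite cardsC1 card_ord; lia.
  case/card_gt1P => a [b [ain bin ab]]; rewrite !inE in ain bin.
  case: (key a ain) => // ea; case: (key b bin) => // eb.
  exact: deg2 rho a b ea eb ab.
have S2 : \sum_(2 <= i < n.+1) 2 * sqrtC (((d i).-1)%:R : algC)
        = \sum_(v | v != rho) 2 * sqrtC (((deg e v).-1)%:R : algC).
  have := degseq_sum n e (fun k => 2 * sqrtC ((k.-1)%:R : algC)).
  rewrite big_ltn ?ltnS // (bigD1 rho) //= -rhoE => /addrI h.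
  exact: h.
have H2 : 2 * sqrtC (Delta%:R : algC) <= 2 * sqrtC ((Delta.-1)%:R : algC) + 1.
  rewrite /Delta dr; have -> : deg e rho = (deg e rho).-1.+1 by lia.
  by apply: sqrt_ineq; lia.
split.
  apply: le_trans (@energy_bound n e r esym eirr rinj) _.
  rewrite (bigD1 rho) //= S2 addrC.
  apply: lerD.
    apply: ler_sum => v vr.
    apply: ler_wpM2l; first by apply: ler0n.
    by rewrite ler_sqrtC ?nnegrE ?ler0n // ler_nat Cv.
  suff -> : #|[set w | e rho w & (r rho < r w)%N]| = Delta by [].
  by rewrite -/(C rho) Crho /Delta dr.
rewrite [\sum_(1 <= i < n.+1) _]big_ltn ?ltnS //.
rewrite [X in _ <= X + _]addrC -addrA lerD2l.
exact: H2.
Qed.
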